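(* Let $q\geq 3$ be a prime power and let $k_1,k_2,l$ be non-negative integers such that $k_1=k_2=l+1\leq q-1$. Then there exists a linear $l$-intersection pair of two MDS codes over $\mathbb{F}_q$ both with parameters $[q,l+1,q-l]_q$.
   Context: An $[n,k,d]_q$ linear code is a $k$-dimensional subspace of $\mathbb{F}_q^n$ with minimum Hamming distance $d$; it is MDS if $d=n-k+1$. Two linear codes $C_1,C_2\subseteq\mathbb{F}_q^n$ form a linear $l$-intersection pair if $\dim(C_1\cap C_2)=l$. *)

(* Defs.v *)
From HB Require Import structures.
From mathcomp Require Import all_boot all_order all_algebra all_field.
Set Implicit Arguments. Unset Strict Implicit. Unset Printing Implicit Defensive.
Import GRing.Theory.
Local Open Scope ring_scope.

Definition hwt (F : fieldType) (n : nat) (x : 'rV[F]_n) : nat :=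
  #|[set i : 'I_n | x 0 i != 0]|.

Definition hdist (F : fieldType) (n : nat) (x y : 'rV[F]_n) : nat := hwt (x - y).

Definition min_dist (F : fieldType) (n : nat) (C : {vspace 'rV[F]_n}) (d : nat) : Prop :=
  (exists x, exists y, [/\ x \in C, y \in C, x != y & hdist x y = d]) /\
  (forall x y, x \in C -> y \in C -> x != y -> (d <= hdist x y)%N).

Definition is_code (F : fieldType) (n : nat) (C : {vspace 'rV[F]_n}) (k d : nat) : Prop :=
  \dim C = k /\ min_dist C d.

Definition is_MDS (F : fieldType) (n : nat) (C : {vspace 'rV[F]_n}) : Prop :=
  exists d, min_dist C d /\ d = (n - \dim C + 1)%N.

Definition l_intersection_pair (F : fieldType) (n : nat) (C1 C2 : {vspace 'rV[F]_n}) (l : nat) : Prop :=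
  \dim (C1 :&: C2) = l.

(* Main.v *)
Require Import Defs.
From mathcomp Require Import all_boot all_order all_algebra all_field.
From mathcomp Require Import zify.
Set Implicit Arguments. Unset Strict Implicit. Unset Printing Implicit Defensive.
Import GRing.Theory.
Local Open Scope ring_scope.

Section RS.
Variable F : finFieldType.
Local Notation q := #|F|.

Definition evw (w : 'I_q -> F) (p : {poly F}) : 'rV[F]_q :=
  \row_i (w i * p.[enum_val i]).

Lemma evw_sum w n (c : 'I_n -> F) (P : 'I_n -> {poly F}) :
  evw w (\sum_(i < n) c i *: P i) = \sum_(i < n) c i *: evw w (P i).
Proof.
apply/rowP => j; rewrite !mxE summxE horner_sum mulr_sumr.
by apply: eq_bigr => i _; rewrite !mxE hornerZ mulrCA.
Qed.

Lemma evwB w (p g : {poly F}) : evw w (p - g) = evw w p - evw w g.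
Proof. by apply/rowP => j; rewrite !mxE hornerD hornerN mulrDr mulrN. Qed.

Lemma evw0 w : evw w 0 = 0.
Proof. by apply/rowP => j; rewrite !mxE horner0 mulr0. Qed.

Lemma hwt0 : hwt (0 : 'rV[F]_q) = 0%N.
Proof.
rewrite /hwt (_ : [set i | _] = set0) ?cards0 //.
by apply/setP => i; rewrite !inE mxE eqxx.
Qed.

Lemma card_enum_pred (P : pred F) :
  #|[set i : 'I_q | P (enum_val i)]| = #|[set x | P x]|.
Proof.
rewrite -(card_imset _ enum_val_inj); apply: eq_card => x.
rewrite inE; apply/imsetP/idP.
  by case=> i; rewrite inE => Hi ->.
by move=> Hx; exists (enum_rank x); rewrite ?inE enum_rankK.
Qed.

Definition wnz (w : 'I_q -> F) := forall i, w i != 0.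

Lemma hwt_evw w p : wnz w -> hwt (evw w p) = #|[set x | p.[x] != 0]|.
Proof.
move=> Hw; rewrite /hwt -card_enum_pred; apply: eq_card => i.
by rewrite !inE mxE mulf_eq0 negb_or Hw.
Qed.

Lemma nz_card (p : {poly F}) :
  addn #|[set x | p.[x] != 0]| #|[set x | p.[x] == 0]| = q.
Proof.
rewrite -(cardsC [set x | p.[x] == 0]) addnC; congr addn.
by apply: eq_card => x; rewrite !inE.
Qed.

Lemma zeros_lt (p : {poly F}) : p != 0 -> (#|[set x | p.[x] == 0%R]| < size p)%N.
Proof.
move=> Hp; rewrite cardE; apply: max_poly_roots => //; last exact: enum_uniq.
by apply/allP => x; rewrite mem_enum inE.
Qed.

Lemma hwt_ge w (p : {poly F}) : wnz w -> p != 0 -> (q < hwt (evw w p) + size p)%N.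
Proof.
move=> Hw Hp; rewrite hwt_evw //; have := zeros_lt Hp; have := nz_card p; lia.
Qed.

Lemma evw_inj w (p : {poly F}) : wnz w -> (size p <= q)%N -> evw w p = 0 -> p = 0.
Proof.
move=> Hw Hs He; apply/eqP; apply/negPn/negP => Hp.
by have := hwt_ge Hw Hp; rewrite He hwt0; lia.
Qed.

Definition gen w s n : n.-tuple 'rV[F]_q := [tuple evw w 'X^(i + s) | i < n].

Lemma gen_nth w s n (i : 'I_n) : (gen w s n)`_i = evw w 'X^(i + s).
Proof. by rewrite -tnth_nth tnth_mktuple. Qed.

Lemma sumX_size n s (c : 'I_n -> F) :
  (size (\sum_(i < n) c i *: 'X^(i + s))%R <= n + s)%N.
Proof.
apply: (leq_trans (size_sum _ _ _)); apply/bigmax_leqP => i _.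
apply: (leq_trans (size_scale_leq _ _)); rewrite size_polyXn; have := ltn_ord i; lia.
Qed.

Lemma sumX_coef n s (c : 'I_n -> F) (j : 'I_n) :
  (\sum_(i < n) c i *: 'X^(i + s))`_(j + s) = c j.
Proof.
rewrite coef_sum (bigD1 j) //= coefZ coefXn eqxx mulr1 big1 ?addr0 //.
move=> i Hij; rewrite coefZ coefXn eqn_add2r.
by rewrite (_ : (j == i :> nat) = false) ?mulr0 //; apply/negbTE; rewrite eq_sym.
Qed.

Lemma free_gen w s n : wnz w -> (n + s <= q)%N -> free (gen w s n).
Proof.
move=> Hw Hns; apply/freeP => k Hk i.
have H0 : evw w (\sum_(i < n) k i *: 'X^(i + s)) = 0.
  by rewrite evw_sum -[RHS]Hk; apply: eq_bigr => j _; rewrite gen_nth.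
have := evw_inj Hw (leq_trans (sumX_size s k) Hns) H0.
by move/(congr1 (fun p : {poly F} => p`_(i + s))); rewrite sumX_coef coef0.
Qed.

Lemma dim_gen w s n : wnz w -> (n + s <= q)%N -> \dim <<gen w s n>> = n.
Proof. by move=> Hw Hns; have := free_gen Hw Hns; rewrite /free size_tuple => /eqP. Qed.

Lemma mem_gen0 w n v : v \in <<gen w 0 n>>%VS ->
  exists p : {poly F}, (size p <= n)%N /\ v = evw w p.
Proof.
move=> /coord_span ->.
pose c := fun i => coord (gen w 0 n) i v.
exists (\sum_(i < n) c i *: 'X^(i + 0)); split.
  by have := sumX_size 0 c; rewrite addn0.
by rewrite evw_sum; apply: eq_bigr => i _; rewrite gen_nth.
Qed.

Lemma mem_gen_back w s n (p : {poly F}) : (size p <= n + s)%N ->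
  (forall j, (j < s)%N -> p`_j = 0) -> evw w p \in <<gen w s n>>%VS.
Proof.
move=> Hs Hz; rewrite -[p]coefK poly_def evw_sum; apply: memv_suml => i _.
case: (ltnP i s) => His; first by rewrite Hz // scale0r mem0v.
apply: memvZ; apply: memv_span.
have Hi : (i - s < n)%N by have := ltn_ord i; lia.
have -> : evw w 'X^i = (gen w s n)`_(Ordinal Hi).
  by rewrite gen_nth /= subnK.
by apply: mem_nth; rewrite size_tuple.
Qed.

End RS.
Section RS2.
Variable F : finFieldType.
Local Notation q := #|F|.

Lemma code_props (w : 'I_q -> F) l : wnz w -> (l.+1 <= q)%N ->
  is_code <<gen w 0 l.+1>>%VS l.+1 (q - l) /\ is_MDS <<gen w 0 l.+1>>%VS.
Proof.
move=> Hw Hl.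
have Hdim : \dim <<gen w 0 l.+1>>%VS = l.+1 by apply: dim_gen => //; lia.
have Hmd : min_dist <<gen w 0 l.+1>>%VS (q - l).
  split.
    pose rs := take l (enum F).
    have Hrs : size rs = l.
      by rewrite size_takel // -cardE; apply: ltnW.
    have Hu : uniq rs by apply: take_uniq; apply: enum_uniq.
    pose p0 := \prod_(x <- rs) ('X - x%:P).
    have Hs0 : size p0 = l.+1 by rewrite size_prod_XsubC Hrs.
    have Hz : #|[set x | p0.[x] == 0]| = l.
      rewrite -Hrs -(card_uniqP Hu); apply: eq_card => x.
      by rewrite inE -root_prod_XsubC.
    have Hwt : hwt (evw w p0) = (q - l)%N.
      by rewrite hwt_evw //; have := nz_card p0; rewrite Hz; lia.
    exists (evw w p0), 0; split.
    - by apply: mem_gen_back; rewrite ?Hs0 ?addn0.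
    - exact: mem0v.
    - by apply/eqP => H; move: Hwt; rewrite H hwt0; lia.
    - by rewrite /hdist subr0.
  move=> x y Hx Hy Hxy.
  have [p [Hp Hxy']] := mem_gen0 (memvB Hx Hy).
  have Hp0 : p != 0.
    by apply/eqP => Hp0; move: Hxy; rewrite Hp0 evw0 in Hxy'; move/eqP: Hxy'; rewrite subr_eq0 => ->.
  have := hwt_ge Hw Hp0; rewrite /hdist Hxy'; lia.
split; first by split.
by exists (q - l)%N; split => //; rewrite Hdim; lia.
Qed.

End RS2.
Theorem theorem3 (F : finFieldType) (k1 k2 l : nat) :
  (3 <= #|F|)%N -> k1 = l.+1 -> k2 = l.+1 -> (l.+1 <= #|F| - 1)%N ->
  exists C1 C2 : {vspace 'rV[F]_#|F|},
    [/\ l_intersection_pair C1 C2 l,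
        is_MDS C1, is_MDS C2,
        is_code C1 k1 (#|F| - l) & is_code C2 k2 (#|F| - l)].
Proof.
move=> Hq -> -> Hl.
have [lam [Hl0 Hl1]] : exists lam : F, lam != 0 /\ lam != 1.
  case: (pickP [pred x : F | (x != 0) && (x != 1)]) => [x /andP [? ?] | H].
    by exists x.
  exfalso.
  have : (#|F| <= #|[set (0%R:F); (1%R:F)]|)%N.
    apply: subset_leq_card; apply/subsetP => x _; have := H x.
    by rewrite /= !inE; case: (x == 0); case: (x == 1).
  rewrite cards2 => H2; have := leq_trans Hq H2; by case: (_ != _).
pose i0 := enum_rank (0 : F).
pose w1 := fun _ : 'I_#|F| => (1 : F).
pose w2 := fun i : 'I_#|F| => if i == i0 then lam else 1.
have Hw1 : wnz w1 by move=> i; apply: oner_neq0.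
have Hw2 : wnz w2 by move=> i; rewrite /w2; case: (i == i0) => //; apply: oner_neq0.
have Hlq : (l.+1 <= #|F|)%N by lia.
have [Hc1 Hm1] := code_props Hw1 Hlq.
have [Hc2 Hm2] := code_props Hw2 Hlq.
exists <<gen w1 0 l.+1>>%VS, <<gen w2 0 l.+1>>%VS; split => //.
rewrite /l_intersection_pair.
suff -> : (<<gen w1 0 l.+1>> :&: <<gen w2 0 l.+1>> = <<gen w1 1 l>>)%VS.
  by apply: dim_gen => //; lia.
apply/eqP; rewrite eqEsubv; apply/andP; split.
  apply/subvP => v /memv_capP [H1 H2].
  have [p [Hp Ev1]] := mem_gen0 H1.
  have [g [Hg Ev2]] := mem_gen0 H2.
  have Hpg : forall x, x != 0 -> p.[x] = g.[x].
    move=> x Hx.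
    have := congr1 (fun u : 'rV[F]_#|F| => u 0 (enum_rank x)) (etrans (esym Ev1) Ev2).
    rewrite /= !mxE enum_rankK /w1 /w2.
    have -> : (enum_rank x == i0) = false.
      by apply/negbTE; apply: contra Hx => /eqP /enum_rank_inj ->.
    by rewrite !mul1r.
  have Epg : p = g.
    apply/eqP; rewrite -subr_eq0; apply/negPn/negP => Hh.
    have := hwt_ge Hw1 Hh.
    have Hs : (size (p - g)%R <= l.+1)%N.
      apply: (leq_trans (size_add _ _)); rewrite size_opp geq_max Hp Hg //.
    have Hn : (hwt (evw w1 (p - g)) <= 1)%N.
      rewrite hwt_evw // -(cards1 (0%R : F)); apply: subset_leq_card.
      apply/subsetP => x; rewrite !inE; apply: contraR => Hx.
      by rewrite hornerD hornerN Hpg // subrr.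
    move=> H; have := leq_trans H (leq_add Hn Hs); move: Hl; generalize #|F| => n; lia.
  subst g.
  have Hp0 : p.[0] = 0.
    have := congr1 (fun u : 'rV[F]_#|F| => u 0 i0) (etrans (esym Ev1) Ev2).
    rewrite /= !mxE /i0 enum_rankK /w1 /w2 eqxx mul1r => E.
    have : (1 - lam) * p.[0] = 0 by rewrite mulrBl mul1r -{1}E subrr.
    by move/eqP; rewrite mulf_eq0 subr_eq0 eq_sym (negbTE Hl1) /= => /eqP.
  rewrite Ev1; apply: mem_gen_back; first by rewrite addn1.
  by move=> j; rewrite ltnS leqn0 => /eqP ->; rewrite -horner_coef0.
apply/span_subvP => u /tnthP [j ->]; rewrite tnth_mktuple memv_cap; apply/andP; split.
  by apply: mem_gen_back; rewrite ?size_polyXn // addn0 addn1 ltnS.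
rewrite (_ : evw w1 _ = evw w2 'X^(j + 1)).
  by apply: mem_gen_back; rewrite ?size_polyXn // addn0 addn1 ltnS.
apply/rowP => i; rewrite !mxE /w1 /w2; case: eqP => [->|] //.
by rewrite /i0 enum_rankK hornerXn addn1 exprS !mul0r !mulr0.
Qed.
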